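(* Let $\Gamma=\{\rho_1<\rho_2<\rho_3<\cdots\}$ be an Arf numerical semigroup, with multiplicity $e=\rho_2$ and conductor $c=\rho_r$ (so $r$ is the index with $\rho_r=c$). Then: \begin{itemize} \item If $e=2$, then for every $m\in\Gamma$ with $2\le m\le c+1$ we have $\delta^2_\Gamma(m)=3$ if $m=2$ and $\delta^2_\Gamma(m)=4$ if $m>2$. \item If $e>2$, then: \begin{enumerate} \item for every $m\in\Gamma$ with $e\le m\le c+e-3$, $\delta^2_\Gamma(m)=3$; \item if $\rho_3=2\rho_2$, then $\delta^2_\Gamma(c+e-2)=3$ if $\rho_{r-1}<c-2$ and $\delta^2_\Gamma(c+e-2)=4$ if $\rho_{r-1}=c-2$; moreover $\delta^2_\Gamma(c+e-1)=4$; \item if $\rho_3<2\rho_2$, then $\delta^2_\Gamma(c+e-2)=3$ if $\rho_{r-1}<c-2$, $\delta^2_\Gamma(c+e-2)=4$ if $\rho_{r-1}=c-2$ and $r=3$, and $\delta^2_\Gamma(c+e-2)=5$ if $\rho_{r-1}=c-2$ and $r>3$; moreover $\delta^2_\Gamma(c+e-1)=4$ if $r=2$ and $\delta^2_\Gamma(c+e-1)=5$ if $r>2$. \end{enumerate} \end{itemize}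
   Context: A numerical semigroup is a subset $\Gamma\subseteq\mathbb N$ containing $0$, closed under addition, with $\mathbb N\setminus\Gamma$ finite. Write its elements in increasing order $0=\rho_1<\rho_2<\cdots$. The multiplicity is $\rho_2$, the conductor is the least integer $c$ with $c+\mathbb N\subseteq\Gamma$. $\Gamma$ is Arf if $\rho_i+\rho_j-\rho_k\in\Gamma$ for all $i\ge j\ge k$. For $x\in\mathbb Z$, $D_\Gamma(x)=\{s\in\Gamma: x-s\in\Gamma\}$, and $D_\Gamma(x_1,\dots,x_k)=D_\Gamma(x_1)\cup\cdots\cup D_\Gamma(x_k)$. The second Feng-Rao distance of an integer $m$ is $\delta^2_\Gamma(m)=\min\{|D_\Gamma(m_1,m_2)| : m\le m_1<m_2,\ m_1,m_2\in\Gamma\}$. *)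

(* Defs.v *)
From mathcomp Require Import all_boot.
Set Implicit Arguments. Unset Strict Implicit. Unset Printing Implicit Defensive.

(* Finiteness of the complement is witnessed by an
   explicit bound [ns_bound] beyond which every natural number is in the set
   (this bound is auxiliary data; all notions below are independent of it). *)
Record numsg := NumSg {
  ns_mem : pred nat;
  ns_bound : nat;
  ns_0 : ns_mem 0;
  ns_add : forall x y, ns_mem x -> ns_mem y -> ns_mem (x + y);
  ns_cofin : forall n, ns_bound <= n -> ns_mem n
}.

(* rho G i : the i-th element (1-indexed) of G in increasing order,
   rho G 1 = 0 < rho G 2 < ...  The first (ns_bound G + i) naturals contain
   at least i elements of G, so the value does not depend on the bound. *)
Definition rho (G : numsg) (i : nat) : nat :=
  nth 0 (filter (ns_mem G) (iota 0 (ns_bound G + i))) i.-1.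

(* conductor: least c with c + N included in G. *)
Definition conductor (G : numsg) : nat :=
  find (fun c => all (ns_mem G) (iota c (ns_bound G - c))) (iota 0 (ns_bound G).+1).

Definition Arf (G : numsg) : Prop :=
  forall i j k, 1 <= k -> k <= j -> j <= i -> ns_mem G (rho G i + rho G j - rho G k).

(* s \in D_G(x) (for x a natural number; for s in G, x - s in G forces s <= x). *)
Definition inD (G : numsg) (x s : nat) : bool :=
  [&& s <= x, ns_mem G s & ns_mem G (x - s)].

(* |D_G(x1, x2)| = |D_G(x1) u D_G(x2)|  (all its elements are <= max x1 x2). *)
Definition cardD2 (G : numsg) (x1 x2 : nat) : nat :=
  count (fun s => inD G x1 s || inD G x2 s) (iota 0 (maxn x1 x2).+1).

(* IsDelta2 G m d  <->  delta^2_G(m) = d, i.e. d is the minimum of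
   |D_G(m1,m2)| over m <= m1 < m2 with m1, m2 in G. *)
Definition IsDelta2 (G : numsg) (m d : nat) : Prop :=
  (exists m1 m2, [/\ m <= m1, m1 < m2, ns_mem G m1, ns_mem G m2 & cardD2 G m1 m2 = d])
  /\ (forall m1 m2, m <= m1 -> m1 < m2 -> ns_mem G m1 -> ns_mem G m2 -> d <= cardD2 G m1 m2).

(* Main.v *)
Require Import Defs.
From mathcomp Require Import all_boot zify.
Set Implicit Arguments. Unset Strict Implicit.


Definition Lg (G : numsg) n := filter (ns_mem G) (iota 0 n).

Lemma Lg_split G n k : Lg G (n + k) = Lg G n ++ filter (ns_mem G) (iota n k).
Proof. by rewrite /Lg iotaD filter_cat. Qed.

Lemma size_Lg G i : i <= size (Lg G (ns_bound G + i)).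
Proof.
rewrite Lg_split size_cat size_filter.
have -> : count (ns_mem G) (iota (ns_bound G) i) = i.
  rewrite (@eq_in_count _ _ predT) ?count_predT ?size_iota //.
  move=> y; rewrite mem_iota => /andP [h _]; exact: ns_cofin.
by rewrite leq_addl.
Qed.

Lemma rhoE G i M : 1 <= i -> ns_bound G + i <= M -> rho G i = nth 0 (Lg G M) i.-1.
Proof.
move=> hi hM; rewrite /rho -(subnKC hM) Lg_split nth_cat -/(Lg G _).
have := size_Lg G i; case: i hi {hM} => // i _ /= h.
by rewrite h.
Qed.

Lemma Lg_sorted G M : sorted ltn (Lg G M).
Proof. apply: sorted_filter; [exact: ltn_trans | exact: iota_ltn_sorted]. Qed.

Lemma rho_lt G i j : 1 <= i -> i < j -> rho G i < rho G j.
Proof.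
move=> hi hij.
have hj : 1 <= j by lia.
rewrite (rhoE (M := ns_bound G + j) hi) ?(rhoE (M := ns_bound G + j) hj) //; last by lia.
have hs := size_Lg G j.
apply: (sorted_ltn_nth ltn_trans 0 (Lg_sorted G _)); rewrite ?inE; lia.
Qed.

Lemma rho_le G i j : 1 <= i -> i <= j -> rho G i <= rho G j.
Proof.
move=> hi; rewrite leq_eqVlt => /orP [/eqP -> //| h].
apply: ltnW; exact: rho_lt hi h.
Qed.

Lemma rho_mem G i : ns_mem G (rho G i).
Proof.
rewrite /rho; set s := filter _ _.
case: (ltnP i.-1 (size s)) => h.
  have := mem_nth 0 h; rewrite mem_filter => /andP [] //.
by rewrite nth_default // ns_0.
Qed.

Lemma rho_surj G x : ns_mem G x -> exists i, 1 <= i /\ rho G i = x.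
Proof.
move=> hx.
set M := ns_bound G + x.+1.
have hin : x \in Lg G M by rewrite mem_filter hx mem_iota /M; lia.
exists (index x (Lg G M)).+1; split => //.
have hk : index x (Lg G M) < size (Lg G M) by rewrite index_mem.
have hsz : index x (Lg G M) < x.+1.
  have : index x (Lg G M) <= index x (Lg G M) by [].
  (* index bounded by x since list sorted strictly starting at >= 0 *)
  have hnth := nth_index 0 hin.
  have srt := Lg_sorted G M.
  suff: forall k, k < size (Lg G M) -> k <= nth 0 (Lg G M) k.
    by move=> /(_ _ hk); rewrite hnth; lia.
  elim=> [|k IH] hk'; first by [].
  have := IH (ltnW hk').
  have := @sorted_ltn_nth _ _ ltn_trans 0 _ srt k k.+1.
  rewrite !inE => /(_ (ltnW hk') hk' (ltnSn k)); lia.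
rewrite (rhoE (M := M)) //=; [exact: nth_index | by rewrite /M leq_add2l].
Qed.

Lemma rho1 G : rho G 1 = 0.
Proof.
rewrite /rho /= addn1 /= -/(iota 1 _).
by rewrite ns_0.
Qed.


Lemma cond_props G : conductor G <= ns_bound G /\
  all (ns_mem G) (iota (conductor G) (ns_bound G - conductor G)).
Proof.
set P := fun c => all (ns_mem G) (iota c (ns_bound G - c)).
have hB : P (ns_bound G) by rewrite /P subnn.
have hhas : has P (iota 0 (ns_bound G).+1).
  by apply/hasP; exists (ns_bound G) => //; rewrite mem_iota; lia.
have hlt : conductor G < size (iota 0 (ns_bound G).+1) by rewrite -has_find.
rewrite size_iota in hlt; split; first by lia.
have := nth_find 0 hhas; rewrite nth_iota //.
Qed.

Lemma cond_mem G y : conductor G <= y -> ns_mem G y.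
Proof.
move=> hy; have [h1 /allP h2] := cond_props G.
case: (leqP (ns_bound G) y) => hb; first exact: ns_cofin.
apply: h2; rewrite mem_iota; lia.
Qed.

Lemma cond_le G k : (forall y, k <= y -> ns_mem G y) -> conductor G <= k.
Proof.
move=> hk.
case: (leqP (ns_bound G) k) => hb; first by have [h1 _] := cond_props G; lia.
rewrite leqNgt; apply/negP => hlt.
have := before_find 0 hlt; rewrite nth_iota; last by lia.
rewrite add0n => /negP; apply; apply/allP => y; rewrite mem_iota => /andP [h _].
exact: hk.
Qed.

Lemma cond_gap G : 0 < conductor G -> ~~ ns_mem G (conductor G).-1.
Proof.
move=> h; apply/negP => hm.
have : conductor G <= (conductor G).-1; last by lia.
apply: cond_le => y; rewrite leq_eqVlt => /orP [/eqP <- //|hy].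
apply: cond_mem; lia.
Qed.


Lemma e_pos G : 0 < rho G 2.
Proof. by have := @rho_lt G 1 2 isT isT; rewrite rho1. Qed.

Lemma e_min G x : ns_mem G x -> 0 < x -> rho G 2 <= x.
Proof.
move=> hx hx0; have [i [hi hxi]] := rho_surj hx; rewrite -hxi in hx0 *.
case: (leqP 2 i) => h; first by apply: rho_le.
have hi1 : i = 1 by lia.
move: hx0; rewrite hi1 rho1; lia.
Qed.

Lemma q_min G x : ns_mem G x -> rho G 2 < x -> rho G 3 <= x.
Proof.
move=> hx hx0; have [i [hi hx']] := rho_surj hx.
case: (leqP 3 i) => h; first by rewrite -hx'; apply: rho_le.
have : rho G i <= rho G 2 by apply: rho_le => //; lia.
lia.
Qed.

Lemma e_lt_q G : rho G 2 < rho G 3.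
Proof. exact: rho_lt. Qed.

Lemma arf3 G : Arf G -> forall x y z, ns_mem G x -> ns_mem G y -> ns_mem G z ->
  z <= y -> y <= x -> ns_mem G (x + y - z).
Proof.
move=> hA x y z hx hy hz hzy hyx.
have [i [hi hxi]] := rho_surj hx; subst x.
have [j [hj hyj]] := rho_surj hy; subst y.
have [k [hk hzk]] := rho_surj hz; subst z.
case: (leqP k j) => hkj; last first.
  have := @rho_lt G _ _ hj hkj; lia.
case: (leqP j i) => hji; last first.
  have := @rho_lt G _ _ hi hji; lia.
by apply: hA.
Qed.

Lemma below_cond G r x : 0 < r -> ns_mem G x -> x < rho G r -> x <= rho G r.-1.
Proof.
move=> hr hx hlt; have [i [hi hx']] := rho_surj hx.
case: (leqP r i) => h.
  have := @rho_le G _ _ hr h; lia.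
rewrite -hx'; apply: rho_le; lia.
Qed.

Lemma card_eq G x y L : uniq L ->
  (forall s, inD G x s || inD G y s -> s \in L) ->
  all (fun s => inD G x s || inD G y s) L -> cardD2 G x y = size L.
Proof.
move=> hu h1 /allP h2; rewrite /cardD2 -size_filter.
apply: perm_size; apply: uniq_perm => //.
  exact/filter_uniq/iota_uniq.
move=> s; rewrite mem_filter mem_iota.
apply/idP/idP => [/andP [/h1 //]|hs].
have := h2 _ hs; rewrite /inD => hP; rewrite hP /=.
case/orP: hP => /and3P [h _ _]; lia.
Qed.

Lemma card_ge G x y L : uniq L ->
  all (fun s => inD G x s || inD G y s) L -> size L <= cardD2 G x y.
Proof.
move=> hu /allP h2; rewrite /cardD2 -size_filter.
apply: uniq_leq_size => // s hs.
rewrite mem_filter mem_iota.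
have := h2 _ hs; rewrite /inD => hP; rewrite hP /=.
case/orP: hP => /and3P [h _ _]; lia.
Qed.

Lemma inD_intro G x s : s <= x -> ns_mem G s -> ns_mem G (x - s) -> inD G x s.
Proof. by move=> *; apply/and3P. Qed.

Lemma Dbasic G x s : inD G x s ->
  s = 0 \/ s = x \/ [/\ rho G 2 <= s, rho G 2 <= x - s, 0 < s < x,
                       ns_mem G s & ns_mem G (x - s)].
Proof.
case/and3P => h1 h2 h3.
case: (posnP s) => hs; first by left.
case: (ltngtP s x) => hsx; [|lia|by right; left].
right; right; split => //; try (apply: e_min => //; lia); lia.
Qed.

Lemma Dgen G x s : Arf G -> ~~ ns_mem G (x - rho G 2) -> inD G x s -> s = 0 \/ s = x.
Proof.
move=> hA hn /Dbasic [->|[->|[h1 h2 /andP [h3 h4] h5 h6]]]; [by left|by right|].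
exfalso; move/negP: hn; apply.
case: (leqP s (x - s)) => h.
  have := arf3 hA h6 h5 (rho_mem G 2) h1 h; rewrite (_ : x - s + s - rho G 2 = x - rho G 2) //; lia.
have := arf3 hA h5 h6 (rho_mem G 2) h2 (ltnW h); rewrite (_ : s + (x - s) - rho G 2 = x - rho G 2) //; lia.
Qed.

Lemma Dq G x s : Arf G -> ~~ ns_mem G (x - rho G 3) -> inD G x s ->
  [\/ s = 0, s = x, s = rho G 2 | s = x - rho G 2].
Proof.
move=> hA hn /Dbasic [->|[->|[h1 h2 /andP [h3 h4] h5 h6]]]; [by constructor 1|by constructor 2|].
case: (ltngtP s (rho G 2)) => hs; [lia| |by constructor 3].
case: (ltngtP (x - s) (rho G 2)) => hs'; [lia| |constructor 4; lia].
have q1 := q_min h5 hs; have q2 := q_min h6 hs'.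
exfalso; move/negP: hn; apply.
case: (leqP s (x - s)) => h.
  have := arf3 hA h6 h5 (rho_mem G 3) q1 h; rewrite (_ : x - s + s - rho G 3 = x - rho G 3) //; lia.
have := arf3 hA h5 h6 (rho_mem G 3) q2 (ltnW h); rewrite (_ : s + (x - s) - rho G 3 = x - rho G 3) //; lia.
Qed.


Lemma c_ge_e G : 2 <= rho G 2 -> 0 < conductor G /\ rho G 2 <= conductor G.
Proof.
move=> h.
case: (posnP (conductor G)) => hc.
  have : rho G 2 <= 1 by apply: e_min => //; apply: cond_mem; lia.
  lia.
split => //; apply: e_min => //; exact: cond_mem.
Qed.

Lemma gap1 G y : 0 < conductor G -> y = conductor G - 1 -> ~~ ns_mem G y.
Proof. move=> h ->; rewrite subn1; exact: cond_gap. Qed.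



Lemma memEq G x y : x = y -> ns_mem G x -> ns_mem G y.
Proof. by move=> ->. Qed.

Ltac gm := match goal with |- is_true (ns_mem ?G ?y) =>
  first [ exact: ns_0 | exact: rho_mem | assumption
  | (apply: cond_mem; lia)
  | (apply: (@memEq G 0); [lia | exact: ns_0])
  | (apply: (@memEq G (rho G 2)); [lia | exact: rho_mem])
  | (apply: (@memEq G (rho G 3)); [lia | exact: rho_mem]) ] end.
Ltac dI := apply: inD_intro; [lia | gm | gm].
Ltac allt := rewrite /= ?andbT; repeat (apply/andP; split);
  apply/orP; first [ (left; dI) | (right; dI) ].

Lemma LB3 G m1 m2 : 0 < m1 -> m1 < m2 -> ns_mem G m1 -> ns_mem G m2 ->
  3 <= cardD2 G m1 m2.
Proof.
move=> h1 h2 g1 g2.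
apply: (@card_ge G m1 m2 [:: 0; m1; m2]); first by rewrite /= !inE; lia.
rewrite /= andbT; apply/and3P; split; apply/orP.
- left; apply: inD_intro => //; [exact: ns_0 | by rewrite subn0].
- left; apply: inD_intro => //; by rewrite subnn ns_0.
- right; apply: inD_intro => //; by rewrite subnn ns_0.
Qed.

Lemma LB4 G m1 m2 : 0 < rho G 2 -> rho G 2 < m1 -> m1 < m2 -> ns_mem G m1 -> ns_mem G m2 ->
  ns_mem G (m1 - rho G 2) \/ ns_mem G (m2 - rho G 2) -> 4 <= cardD2 G m1 m2.
Proof.
move=> h0 h1 h2 g1 g2 h3.
apply: (@card_ge G m1 m2 [:: 0; rho G 2; m1; m2]); first by rewrite /= !inE; lia.
rewrite /= andbT; apply/and4P; split; apply/orP.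
- left; apply: inD_intro => //; [exact: ns_0 | by rewrite subn0].
- case: h3 => h3; [left|right]; apply: inD_intro => //; try exact: rho_mem; lia.
- left; apply: inD_intro => //; by rewrite subnn ns_0.
- right; apply: inD_intro => //; by rewrite subnn ns_0.
Qed.

Lemma TP G x1 x2 : Arf G -> 0 < x1 -> x1 < x2 -> ns_mem G x1 -> ns_mem G x2 ->
  ~~ ns_mem G (x1 - rho G 2) -> ~~ ns_mem G (x2 - rho G 2) -> cardD2 G x1 x2 = 3.
Proof.
move=> hA h1 h2 g1 g2 n1 n2.
apply: (@card_eq G x1 x2 [:: 0; x1; x2]); first by rewrite /= !inE; lia.
  move=> s /orP [/(Dgen hA n1)|/(Dgen hA n2)] => H; rewrite !inE; lia.
rewrite /= andbT; apply/and3P; split; apply/orP.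
- left; apply: inD_intro => //; [exact: ns_0 | by rewrite subn0].
- left; apply: inD_intro => //; by rewrite subnn ns_0.
- right; apply: inD_intro => //; by rewrite subnn ns_0.
Qed.




Lemma WA G : Arf G -> 2 <= rho G 2 -> rho G 3 = 2 * rho G 2 -> 2 <= conductor G ->
  cardD2 G (conductor G + rho G 2 - 1) (conductor G + 2 * rho G 2 - 1) = 4.
Proof.
move=> hA he hq hc.
have hc0 : 0 < conductor G by lia.
apply: (@card_eq G _ _ [:: 0; rho G 2; conductor G + rho G 2 - 1; conductor G + 2 * rho G 2 - 1]).
- rewrite /= !inE; lia.
- have n1 : ~~ ns_mem G (conductor G + rho G 2 - 1 - rho G 2) by apply: gap1 hc0 _; lia.
  have n2 : ~~ ns_mem G (conductor G + 2 * rho G 2 - 1 - rho G 3) by apply: gap1 hc0 _; lia.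
  move=> s /orP [/(Dgen hA n1)|/(Dq hA n2)] => H; rewrite !inE; case: H => H; lia.
- allt.
Qed.

Lemma WB G : Arf G -> 2 <= rho G 2 -> conductor G = rho G 2 ->
  cardD2 G (2 * rho G 2 - 1) (2 * rho G 2) = 4.
Proof.
move=> hA he hc.
have hc0 : 0 < conductor G by lia.
apply: (@card_eq G _ _ [:: 0; rho G 2; 2 * rho G 2 - 1; 2 * rho G 2]).
- rewrite /= !inE; lia.
- have n1 : ~~ ns_mem G (2 * rho G 2 - 1 - rho G 2) by apply: gap1 hc0 _; lia.
  move=> s /orP [/(Dgen hA n1)|/Dbasic] => H; rewrite !inE.
    case: H => H; lia.
  case: H => [H|[H|[H1 H2 H3 H4 H5]]]; lia.
- allt.
Qed.

Lemma WC G : Arf G -> 2 <= rho G 2 -> rho G 3 < 2 * rho G 2 -> rho G 2 < conductor G ->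
  cardD2 G (conductor G + rho G 2 - 1) (conductor G + rho G 3 - 1) = 5.
Proof.
move=> hA he hq hc.
have hc0 : 0 < conductor G by lia.
have heq := e_lt_q G.
apply: (@card_eq G _ _ [:: 0; rho G 2; conductor G + rho G 3 - 1 - rho G 2;
   conductor G + rho G 2 - 1; conductor G + rho G 3 - 1]).
- rewrite /= !inE; lia.
- have n1 : ~~ ns_mem G (conductor G + rho G 2 - 1 - rho G 2) by apply: gap1 hc0 _; lia.
  have n2 : ~~ ns_mem G (conductor G + rho G 3 - 1 - rho G 3) by apply: gap1 hc0 _; lia.
  move=> s /orP [/(Dgen hA n1)|/(Dq hA n2)] => H; rewrite !inE; case: H => H; lia.
- allt.
Qed.


Lemma W2e G : Arf G -> 2 <= rho G 2 -> conductor G = rho G 2 + 2 ->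
  cardD2 G (2 * rho G 2) (2 * rho G 2 + 1) = 4.
Proof.
move=> hA he hc.
have hc0 : 0 < conductor G by lia.
apply: (@card_eq G _ _ [:: 0; rho G 2; 2 * rho G 2; 2 * rho G 2 + 1]).
- rewrite /= !inE; lia.
- have n2 : ~~ ns_mem G (2 * rho G 2 + 1 - rho G 2) by apply: gap1 hc0 _; lia.
  move=> s /orP [/Dbasic|/(Dgen hA n2)] => H; rewrite !inE.
    case: H => [H|[H|[H1 H2 H3 H4 H5]]]; lia.
  case: H => H; lia.
- allt.
Qed.

Lemma W24 G : rho G 2 = 2 -> cardD2 G 2 4 = 3.
Proof.
move=> he.
have g2 : ns_mem G 2 by rewrite -he rho_mem.
have g4 : ns_mem G 4 by apply: (ns_add g2 g2).
apply: (@card_eq G _ _ [:: 0; 2; 4]).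
- by [].
- move=> s /orP [/Dbasic|/Dbasic] => H; rewrite !inE;
    case: H => [H|[H|[H1 H2 H3 H4 H5]]]; lia.
- apply/allP => s; rewrite !inE => /or3P [] /eqP ->; apply/orP; [left|left|right]; dI.
Qed.


Lemma Geven G k : rho G 2 = 2 -> ns_mem G (2 * k).
Proof.
move=> he; elim: k => [|k IH]; first by rewrite muln0 ns_0.
have g2 : ns_mem G 2 by rewrite -he rho_mem.
by rewrite mulnS; apply: ns_add.
Qed.

Lemma half_dec y : y = odd y + 2 * y./2.
Proof. by rewrite mul2n odd_double_half. Qed.

Lemma e2_odd G x : rho G 2 = 2 -> ns_mem G x -> odd x -> conductor G <= x - 1.
Proof.
move=> he hx ho; apply: cond_le => y hy.
have hxd := half_dec x; rewrite ho in hxd.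
have hyd := half_dec y.
case hoy : (odd y) in hyd.
  apply: (@memEq G (x + 2 * (y./2 - x./2))); first by lia.
  by apply: ns_add => //; apply: Geven.
apply: (@memEq G (2 * y./2)); first by lia.
exact: Geven.
Qed.

Lemma e2_gen G x : rho G 2 = 2 -> ns_mem G x -> 3 <= x -> ~~ ns_mem G (x - 2) ->
  x = conductor G + 1.
Proof.
move=> he hx h3 hn.
have hxd := half_dec x.
case hox : (odd x) in hxd.
  have := e2_odd he hx hox.
  case: (leqP (conductor G) (x - 2)) => h; last by lia.
  by rewrite cond_mem in hn.
exfalso; move/negP: hn; apply.
apply: (@memEq G (2 * (x./2 - 1))); first by lia.
exact: Geven.
Qed.

Lemma e2_q G : rho G 2 = 2 -> rho G 3 = 4 \/ (rho G 3 = 3 /\ conductor G = 2).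
Proof.
move=> he.
have g4 : ns_mem G 4 by apply: (@memEq G (2 * 2)) => //; apply: Geven.
have := q_min g4; rewrite he => /(_ isT) hq4.
have := e_lt_q G; rewrite he => hq2.
case: (ltngtP (rho G 3) 3) => h; [lia| by left; lia|right; split => //].
have := e2_odd he (rho_mem G 3); rewrite h => /(_ isT) hc.
have [_ hc2] : 0 < conductor G /\ rho G 2 <= conductor G by apply: c_ge_e; rewrite he.
lia.
Qed.

Lemma e2_lb G m1 m2 : rho G 2 = 2 -> 3 <= m1 -> m1 < m2 -> ns_mem G m1 -> ns_mem G m2 ->
  4 <= cardD2 G m1 m2.
Proof.
move=> he h1 h2 g1 g2.
case: (boolP (ns_mem G (m1 - 2))) => n1.
  apply: LB4 => //; rewrite ?he //; try lia; by left.
case: (boolP (ns_mem G (m2 - 2))) => n2.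
  apply: LB4 => //; rewrite ?he //; try lia; by right.
have := e2_gen he g1 h1 n1; have := e2_gen he g2 (leq_trans h1 (ltnW h2)) n2; lia.
Qed.



Lemma LB5 G m1 m2 : Arf G -> rho G 3 < 2 * rho G 2 -> rho G 2 < conductor G ->
  conductor G + rho G 2 - 1 <= m1 -> m1 < m2 -> ns_mem G m1 -> ns_mem G m2 ->
  5 <= cardD2 G m1 m2.
Proof.
move=> hA hq hc h1 h2 g1 g2.
have heq := e_lt_q G; have he := e_pos G.
case: (eqVneq (m2 - rho G 2) m1) => hm.
  apply: (@card_ge G m1 m2 [:: 0; rho G 2; rho G 3; m1; m2]).
    rewrite /= !inE; lia.
  allt.
apply: (@card_ge G m1 m2 [:: 0; rho G 2; m2 - rho G 2; m1; m2]).
  rewrite /= !inE; lia.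
allt.
Qed.



Theorem theorem4p12 (G : numsg) (r : nat) :
  Arf G -> 0 < r -> rho G r = conductor G ->
  let e := rho G 2 in
  let c := conductor G in
  (e = 2 ->
     forall m, ns_mem G m -> 2 <= m -> m <= c + 1 ->
       IsDelta2 G m (if m == 2 then 3 else 4)) /\
  (2 < e ->
     (forall m, ns_mem G m -> e <= m -> m <= c + e - 3 -> IsDelta2 G m 3) /\
     (rho G 3 = 2 * e ->
        (rho G r.-1 < c - 2 -> IsDelta2 G (c + e - 2) 3) /\
        (rho G r.-1 = c - 2 -> IsDelta2 G (c + e - 2) 4) /\
        IsDelta2 G (c + e - 1) 4) /\
     (rho G 3 < 2 * e ->
        (rho G r.-1 < c - 2 -> IsDelta2 G (c + e - 2) 3) /\
        (rho G r.-1 = c - 2 -> r = 3 -> IsDelta2 G (c + e - 2) 4) /\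
        (rho G r.-1 = c - 2 -> 3 < r -> IsDelta2 G (c + e - 2) 5) /\
        (r = 2 -> IsDelta2 G (c + e - 1) 4) /\
        (2 < r -> IsDelta2 G (c + e - 1) 5))).
Proof.
move=> hA hr hrc; cbv zeta.
have hepos := e_pos G; have heq := e_lt_q G.
split.
  move=> he m hm h2 hmc.
  have [hc0 hce] : 0 < conductor G /\ rho G 2 <= conductor G by apply: c_ge_e; rewrite he.
  case: eqP => [hm2|hm2].
    split.
      exists 2, 4; split => //; first by rewrite hm2.
      - by rewrite -he rho_mem.
      - by apply: (@memEq G (2 * 2)) => //; apply: Geven.
      - exact: W24.
    move=> m1 m2 h1 h1' g1 g2; apply: LB3 => //; lia.
  split; last first.
    move=> m1 m2 h1 h1' g1 g2; apply: e2_lb => //; lia.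
  case: (e2_q he) => [hq|[hq hc2]].
    exists (conductor G + rho G 2 - 1), (conductor G + 2 * rho G 2 - 1); split; try lia; try gm.
    apply: WA => //; lia.
  exists (2 * rho G 2 - 1), (2 * rho G 2); split; try lia; try gm.
  apply: WB => //; lia.
move=> he.
have [hc0 hce] : 0 < conductor G /\ rho G 2 <= conductor G by apply: c_ge_e; lia.
have hgap : ~~ ns_mem G (conductor G - 1) by apply: gap1.
have hB1 : rho G r.-1 < conductor G - 2 -> IsDelta2 G (conductor G + rho G 2 - 2) 3.
  move=> hlt.
  have n2 : ~~ ns_mem G (conductor G - 2).
    apply/negP => g.
    have h' : conductor G - 2 < rho G r by rewrite hrc; lia.
    have HH := below_cond hr g h'; by rewrite ltnNge HH in hlt.
  split.
    exists (conductor G + rho G 2 - 2), (conductor G + rho G 2 - 1); split; try lia; try gm.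
    apply: TP => //; try lia; try gm.
      by rewrite (_ : _ - _ = conductor G - 2) //; lia.
    by rewrite (_ : _ - _ = conductor G - 1) //; lia.
  move=> m1 m2 h1 h1' g1 g2; apply: LB3 => //; lia.
have hLB4 : forall m1 m2, conductor G + rho G 2 - 2 <= m1 -> m1 < m2 ->
    ns_mem G m1 -> ns_mem G m2 -> (ns_mem G (conductor G - 2) \/ conductor G + rho G 2 - 1 <= m1) ->
    4 <= cardD2 G m1 m2.
  move=> m1 m2 h1 h2 g1 g2 hor.
  apply: LB4 => //; try lia.
  case: (ltngtP m1 (conductor G + rho G 2 - 2)) => h; [lia| |].
    right; gm.
  case: hor => hor; last by lia.
  by left; rewrite (_ : _ - _ = conductor G - 2) //; lia.
split.
  move=> m hm hem hmc.
  have [x1 [hx1 hx1' hn1]] : exists x1, [/\ conductor G + rho G 2 - 3 <= x1,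
      x1 < conductor G + rho G 2 - 1 & ~~ ns_mem G (x1 - rho G 2)].
    case: (boolP (ns_mem G (conductor G - 3))) => g3.
      exists (conductor G + rho G 2 - 2); split; try lia.
      apply/negP => g2.
      have g2' : ns_mem G (conductor G - 2).
        by apply: (@memEq G (conductor G + rho G 2 - 2 - rho G 2)) => //; lia.
      have h32 : conductor G - 3 <= conductor G - 2 by lia.
      have H := arf3 hA g2' g2' g3 h32 (leqnn _).
      move/negP: hgap; apply.
      by apply: (@memEq G (conductor G - 2 + (conductor G - 2) - (conductor G - 3))); [lia|].
    exists (conductor G + rho G 2 - 3); split; try lia.
    by rewrite (_ : _ - _ = conductor G - 3) //; lia.
  split.
    exists x1, (conductor G + rho G 2 - 1); split; try lia; try gm.
    apply: TP => //; try lia; try gm.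
    by rewrite (_ : _ - _ = conductor G - 1) //; lia.
  move=> m1 m2 h1 h1' g1 g2; apply: LB3 => //; lia.
split.
  move=> hq; split; first exact: hB1.
  have hW : exists m1 m2, [/\ conductor G + rho G 2 - 1 <= m1, m1 < m2, ns_mem G m1, ns_mem G m2
      & cardD2 G m1 m2 = 4].
    exists (conductor G + rho G 2 - 1), (conductor G + 2 * rho G 2 - 1); split; try lia; try gm.
    apply: WA => //; lia.
  have [m1 [m2 [w1 w2 w3 w4 w5]]] := hW.
  split.
    move=> heqc; split.
      exists m1, m2; split => //; lia.
    move=> n1 n2 h1 h2 g1 g2; apply: hLB4 => //; left; rewrite -heqc; exact: rho_mem.
  split.
    exists m1, m2; split => //; lia.
  move=> n1 n2 h1 h2 g1 g2; apply: hLB4 => //; [lia | by right].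
move=> hq; split; first exact: hB1.
split.
  move=> heqc hr3.
  have hc2 : conductor G = rho G 2 + 2 by move: heqc; rewrite hr3 /=; lia.
  split.
    exists (2 * rho G 2), (2 * rho G 2 + 1); split; try lia; try gm.
    apply: W2e => //; lia.
  move=> n1 n2 h1 h2 g1 g2; apply: hLB4 => //; left; rewrite -heqc; exact: rho_mem.
split.
  move=> heqc hr3.
  have hce' : rho G 2 < rho G r.-1 by apply: rho_lt; lia.
  have hcq : rho G 3 < conductor G by rewrite -hrc; apply: rho_lt; lia.
  have gc2 : ns_mem G (conductor G - 2) by rewrite -heqc rho_mem.
  split.
    exists (conductor G + rho G 2 - 1), (conductor G + rho G 3 - 1); split; try lia; try gm.
    apply: WC => //; lia.
  move=> m1 m2 h1 h2 g1 g2.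
  case: (ltngtP m1 (conductor G + rho G 2 - 2)) => h; [lia| apply: LB5 => //; lia|].
  subst m1.
  have ga : ns_mem G (conductor G + rho G 2 - 2 - rho G 2)
    by rewrite (_ : _ - _ = conductor G - 2) //; lia.
  have gb : ns_mem G (conductor G + rho G 2 - 2 - (conductor G - 2))
    by apply: (@memEq G (rho G 2)); [lia | exact: rho_mem].
  apply: (@card_ge G _ m2 [:: 0; rho G 2; conductor G - 2; conductor G + rho G 2 - 2; m2]).
    rewrite /= !inE; lia.
  allt.
split.
  move=> hr2.
  have hc : conductor G = rho G 2 by rewrite -hrc hr2.
  split.
    exists (2 * rho G 2 - 1), (2 * rho G 2); split; try lia; try gm.
    apply: WB => //; lia.
  move=> n1 n2 h1 h2 g1 g2; apply: hLB4 => //; [lia | by right].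
move=> hr2.
have hcq : rho G 3 <= conductor G by rewrite -hrc; apply: rho_le; lia.
split.
  exists (conductor G + rho G 2 - 1), (conductor G + rho G 3 - 1); split; try lia; try gm.
  apply: WC => //; lia.
move=> m1 m2 h1 h2 g1 g2; apply: LB5 => //; lia.
Qed.
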